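(* $\theta_n(B_n)\asymp\sqrt n$, i.e. there exist constants $c_1,c_2>0$ not depending on $n$ such that $c_1\sqrt n\le\theta_n(B_n)\le c_2\sqrt n$ for all $n\in\mathbb{N}$.
   Context: $B_n=\{x\in\mathbb{R}^n:\|x\|\le1\}$ (Euclidean norm). $C(B_n)$ is the space of continuous real functions on $B_n$ with the max norm; $\Pi_1(\mathbb{R}^n)$ is the set of polynomials in $n$ variables of degree at most $1$. For a nondegenerate simplex $S\subset B_n$ with vertices $x^{(1)},\dots,x^{(n+1)}$, the corresponding interpolation projector $P:C(B_n)\to\Pi_1(\mathbb{R}^n)$ is defined by $Pf(x^{(j)})=f(x^{(j)})$, and $\|P\|_{B_n}$ is its operator norm on $C(B_n)$. $\theta_n(B_n)$ is the minimal value of $\|P\|_{B_n}$ over all nondegenerate simplices with vertices in $B_n$. *)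

(* Defs.v *)
From HB Require Import structures.
From mathcomp Require Import all_boot all_order all_algebra.
From mathcomp Require Import all_classical all_reals all_analysis.
Set Implicit Arguments. Unset Strict Implicit. Unset Printing Implicit Defensive.
Import Order.TTheory GRing.Theory Num.Theory.
Import numFieldNormedType.Exports.
Local Open Scope classical_set_scope.
Local Open Scope ring_scope.

Section Defs.
Variable R : realType.

Definition enorm (n : nat) (x : 'rV[R]_n) : R := Num.sqrt (\sum_i x 0 i ^+ 2).

Definition Bn (n : nat) : set 'rV[R]_n := [set x | enorm x <= 1].

Definition affine_fun (n : nat) (a : 'rV[R]_n) (b : R) (x : 'rV[R]_n) : R :=
  \sum_i a 0 i * x 0 i + b.

(* simplex = n+1 vertices; nondegenerate iff det of the matrix with rows
   (x^(j), 1) is nonzero *)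
Definition simplex_matrix (n : nat) (v : 'I_n.+1 -> 'rV[R]_n) : 'M[R]_n.+1 :=
  \matrix_(i < n.+1, j < n.+1)
     (if unlift ord_max j is Some k then v i 0 k else 1).

Definition nondegenerate (n : nat) (v : 'I_n.+1 -> 'rV[R]_n) : Prop :=
  \det (simplex_matrix v) != 0.

(* Pf = the polynomial p in Pi_1 with p(x^(j)) = f(x^(j)) for all j
   (unique for a nondegenerate simplex). *)
Definition proj_norm (n : nat) (v : 'I_n.+1 -> 'rV[R]_n) : \bar R :=
  ereal_sup [set r : \bar R |
    exists (f : 'rV[R]_n -> R) (a : 'rV[R]_n) (b : R) (z : 'rV[R]_n),
      [/\ {within (@Bn n), continuous f},
          (forall y, (@Bn n) y -> `|f y| <= 1),
          (forall j, affine_fun a b (v j) = f (v j)),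
          (@Bn n) z &
          r = (`| affine_fun a b z |)%:E]].

Definition theta (n : nat) : \bar R :=
  ereal_inf [set proj_norm v | v in
     [set v : 'I_n.+1 -> 'rV[R]_n | (forall j, (@Bn n) (v j)) /\ nondegenerate v]].

End Defs.

(* Main.v *)
Require Import Defs.
From HB Require Import structures.
From mathcomp Require Import all_boot all_order all_algebra.
From mathcomp Require Import all_classical all_reals all_analysis.
From mathcomp Require Import ring lra.
Import Order.TTheory GRing.Theory Num.Theory.
Import numFieldNormedType.Exports.
Local Open Scope ring_scope.

Section Helpers.
Variable R : realType.

Lemma sum_lin3 (I : finType) (a b c : R) (u v w : I -> R) :
  \sum_i (a * u i + b * v i + c * w i) =
  a * \sum_i u i + b * \sum_i v i + c * \sum_i w i.
Proof. by rewrite !big_split /= -!mulr_sumr. Qed.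

Lemma cauchy_schwarz (I : finType) (x y : I -> R) :
  (\sum_i x i * y i) ^+ 2 <= (\sum_i x i ^+ 2) * (\sum_i y i ^+ 2).
Proof.
set A := \sum_i x i ^+ 2; set B := \sum_i x i * y i; set C := \sum_i y i ^+ 2.
have A0 : 0 <= A by apply: sumr_ge0 => i _; exact: sqr_ge0.
have [Az|Ap] := eqVneq A 0.
  have x0 : forall i, x i = 0.
    move=> i; apply/eqP; rewrite -sqrf_eq0; apply/eqP.
    by apply: (psumr_eq0P _ Az) => // j _; exact: sqr_ge0.
  rewrite /B big1 ?expr0n ?Az ?mul0r // => i _; by rewrite x0 mul0r.
have H : 0 <= \sum_i (A * y i - B * x i) ^+ 2 by apply: sumr_ge0 => i _; exact: sqr_ge0.
have E : \sum_i (A * y i - B * x i) ^+ 2 = A * (A * C - B ^+ 2).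
  rewrite (eq_bigr (fun i => (A^+2) * (y i ^+ 2) + (- 2 * A * B) * (x i * y i) + (B ^+ 2) * (x i ^+ 2))); last by move=> i _; ring.
  rewrite sum_lin3 -/A -/B -/C; ring.
rewrite E in H.
have Ap' : 0 < A by rewrite lt_def Ap A0.
rewrite pmulr_rge0 // subr_ge0 in H.
exact: H.
Qed.


Lemma sign_choice (k m : nat) (G : 'I_m -> 'I_k -> R) :
  exists s : 'I_m -> R, (forall j, s j = 1 \/ s j = -1) /\
    \sum_j \sum_i G j i ^+ 2 <= \sum_i (\sum_j s j * G j i) ^+ 2.
Proof.
elim: m G => [|m IH] G.
  exists (fun _ => 1); split; first by left.
  rewrite big_ord0; apply: sumr_ge0 => i _; exact: sqr_ge0.
have [s' [s'1 Hs']] := IH (fun j => G (widen_ord (leqnSn m) j)).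
set S := fun i => \sum_j s' j * G (widen_ord (leqnSn m) j) i.
set g := fun i => G ord_max i.
set t : R := if 0 <= \sum_i S i * g i then 1 else -1.
exists (fun j => if unlift ord_max j is Some j' then s' j' else t); split.
  move=> j; case: (unlift ord_max j) => [j'|]; first exact: s'1.
  by rewrite /t; case: ifP => _; [left|right].
have hw : forall j : 'I_m, unlift ord_max (widen_ord (leqnSn m) j) = Some j.
  move=> j; have -> : widen_ord (leqnSn m) j = lift ord_max j.
    by apply: val_inj; rewrite /= /bump leqNgt ltn_ord.
  by rewrite liftK.
rewrite big_ord_recr /=.
rewrite [X in _ <= X](eq_bigr (fun i => (S i + t * g i) ^+ 2)); last first.
  move=> i _; rewrite big_ord_recr /= unlift_none; congr ((_ + _ * _) ^+ 2).
  by apply: eq_bigr => j _; rewrite hw.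
rewrite [X in _ <= X](eq_bigr (fun i => 1 * S i ^+ 2 + (2 * t) * (S i * g i) + (t ^+ 2) * (g i ^+ 2))); last by move=> i _; ring.
rewrite sum_lin3.
have t2 : t ^+ 2 = 1 by rewrite /t; case: ifP => _; rewrite ?expr1n ?sqrrN ?expr1n.
have tp : 0 <= t * \sum_i S i * g i.
  rewrite /t; case: ifP => h; first by rewrite mul1r.
  by rewrite mulN1r oppr_ge0 ltW // ltNge h.
rewrite t2 !mul1r.
have : \sum_j \sum_i G (widen_ord (leqnSn m) j) i ^+ 2 <= \sum_i S i ^+ 2 by exact: Hs'.
rewrite /g; lra.
Qed.

End Helpers.

Section Geo.
Variable R : realType.

Lemma widen_lift n (k : 'I_n) : widen_ord (leqnSn n) k = lift ord_max k.
Proof. by apply: val_inj; rewrite /= /bump leqNgt ltn_ord. Qed.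

Lemma enorm_le1 n (x : 'rV[R]_n) : enorm x <= 1 -> \sum_i x 0 i ^+ 2 <= 1.
Proof.
move=> h; rewrite leNgt; apply/negP => h1.
have : 1 < enorm x by rewrite /enorm -sqrtr1 ltr_sqrt // (lt_trans ltr01 h1).
by rewrite ltNge h.
Qed.

Lemma sqrt_of_sq_le (x y : R) : 0 <= x -> 0 <= y -> x ^+ 2 <= y -> x <= Num.sqrt y.
Proof.
move=> x0 y0 h; rewrite -(ger0_norm x0) -sqrtr_sqr ler_sqrt //.
Qed.

Lemma sum_abs_le n (z : 'rV[R]_n) : \sum_i z 0 i ^+ 2 <= 1 ->
  \sum_i `|z 0 i| <= Num.sqrt n%:R.
Proof.
move=> h; apply: sqrt_of_sq_le; first by apply: sumr_ge0 => i _.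
  by rewrite ler0n.
have := @cauchy_schwarz R _ (fun _ : 'I_n => (1:R)) (fun i => `|z 0 i|).
under eq_bigr do rewrite mul1r.
under [X in _ * X]eq_bigr do rewrite real_normK ?num_real //.
under [X in X * _]eq_bigr do rewrite expr1n.
rewrite sumr_const card_ord => H; apply: (le_trans H).
by rewrite -[X in _ <= X]mulr1 ler_wpM2l // ler0n.
Qed.

Lemma cont_sum n (F : 'I_n -> 'rV[R]_n -> R) :
  (forall i, continuous (F i)) -> continuous (fun x => \sum_i F i x).
Proof.
move=> Fc.
suff H : forall r, continuous (fun x => \sum_(i <- r) F i x) by exact: H.
elim=> [|i r IHr] /=.
  have -> : (fun x => \sum_(i <- [::]) F i x) = fun _ => 0.
    by apply/funext => y; rewrite big_nil.
  by move=> x; exact: cst_continuous.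
have -> : (fun x => \sum_(j <- i :: r) F j x) = fun x => F i x + \sum_(j <- r) F j x.
  by apply/funext => y; rewrite big_cons.
move=> x; apply: (@continuousD _ R^o _ (F i) (fun x => _) x); [exact: Fc | exact: IHr].
Qed.

Lemma affine_cont n (a : 'rV[R]_n) (b : R) : continuous (affine_fun a b).
Proof.
move=> x; rewrite /affine_fun.
have h1 : {for x, continuous (fun x : 'rV[R]_n => \sum_i a 0 i * x 0 i : R^o)}.
  apply: cont_sum => i y.
  have c1 : {for y, continuous (fun _ : 'rV[R]_n => a 0 i : R^o)} by exact: cst_continuous.
  have c2 : {for y, continuous (fun x : 'rV[R]_n => x 0 i : R^o)} by exact: coord_continuous.
  exact: (continuousM c1 c2).
have h2 : {for x, continuous (fun _ : 'rV[R]_n => b : R^o)} by exact: cst_continuous.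
exact: (continuousD h1 h2).
Qed.

End Geo.

Section Clamp.
Variable R : realType.

Definition clampf {n} (p : 'rV[R]_n -> R) x : R := Num.max (-1) (Num.min 1 (p x)).

Lemma clamp_cont n (p : 'rV[R]_n -> R) : continuous p -> continuous (clampf p).
Proof.
move=> pc x.
have c1 : {for x, continuous (fun _ : 'rV[R]_n => -1 : R^o)} by exact: cst_continuous.
have c2 : {for x, continuous (fun _ : 'rV[R]_n => 1 : R^o)} by exact: cst_continuous.
have c3 : {for x, continuous (p : _ -> R^o)} by exact: pc.
exact: (continuous_max c1 (continuous_min c2 c3)).
Qed.

Lemma clamp_bound n (p : 'rV[R]_n -> R) x : `|clampf p x| <= 1.
Proof.
rewrite /clampf ler_norml; apply/andP; split.
  by rewrite le_max lexx.
have h : (-1 : R) <= 1 by lra.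
by rewrite ge_max h /= ge_min lexx.
Qed.

Lemma clamp_pm1 n (p : 'rV[R]_n -> R) x : (p x = 1 \/ p x = -1) -> clampf p x = p x.
Proof.
rewrite /clampf; case=> ->.
  have h : (-1 : R) <= 1 by lra.
  by rewrite minxx; apply/max_idPr.
have h : (-1 : R) <= 1 by lra.
by rewrite (min_idPr h) maxxx.
Qed.

End Clamp.

Section Lower.
Variable R : realType.

Lemma affine_mx n (v : 'I_n.+1 -> 'rV[R]_n) (c : 'cV[R]_n.+1) i :
  affine_fun (\row_k c (lift ord_max k) 0) (c ord_max 0) (v i) = (simplex_matrix v *m c) i 0.
Proof.
rewrite /affine_fun mxE big_ord_recr /= /simplex_matrix mxE unlift_none mul1r.
congr (_ + _); apply: eq_bigr => k _; rewrite !mxE widen_lift liftK mulrC.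
by [].
Qed.

Lemma lower n (v : 'I_n.+1 -> 'rV[R]_n) : (0 < n)%N -> (forall j, Bn (v j)) ->
  Defs.nondegenerate v -> ((1/2 * Num.sqrt n%:R)%:E <= proj_norm v)%E.
Proof.
move=> n0 vB nd.
set M := simplex_matrix v.
have Mu : M \in unitmx by rewrite unitmxE unitfE.
set C := invmx M.
have MC : M *m C = 1%:M by exact: mulmxV.
have colj : forall j i, affine_fun (\row_k C (lift ord_max k) j) (C ord_max j) (v i) = (i == j)%:R.
  move=> j i.
  rewrite (_ : \row_k C (lift ord_max k) j = \row_k (col j C) (lift ord_max k) 0); last first.
    by apply/rowP => k; rewrite !mxE.
  rewrite (_ : C ord_max j = col j C ord_max 0); last by rewrite mxE.
  rewrite affine_mx colE mulmxA MC mul1mx !mxE.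
  by rewrite andbT.
have vsq : forall j, \sum_k v j 0 k ^+ 2 <= 1 by move=> j; apply: enorm_le1; exact: (vB j).
have Gj : forall j, 1/4 <= \sum_k C (lift ord_max k) j ^+ 2.
  move=> j.
  pose i : 'I_n.+1 := if j == ord0 then ord_max else ord0.
  have ij : i != j.
    rewrite /i; case: ifP => h; last by rewrite eq_sym h.
    by rewrite (eqP h); apply/eqP => /(congr1 val) /=; move: n0; case: n {v vB nd M Mu C MC colj vsq j h i} => //.
  have h1 := colj j j; have h0 := colj j i.
  rewrite eqxx in h1; rewrite (negbTE ij) in h0.
  rewrite /affine_fun /= ?mulr1n ?mulr0n in h1 h0.
  rewrite (eq_bigr (fun k => C (lift ord_max k) j * v j 0 k)) in h1; last by move=> k _; rewrite mxE.
  rewrite (eq_bigr (fun k => C (lift ord_max k) j * v i 0 k)) in h0; last by move=> k _; rewrite mxE.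
  have D : \sum_k C (lift ord_max k) j * (v j 0 k - v i 0 k) = 1.
    rewrite (eq_bigr (fun k => C (lift ord_max k) j * v j 0 k - C (lift ord_max k) j * v i 0 k)); last by move=> k _; ring.
    rewrite sumrB; lra.
  have CS := @cauchy_schwarz R _ (fun k => C (lift ord_max k) j) (fun k => v j 0 k - v i 0 k).
  rewrite D expr1n in CS.
  have Dle : \sum_k (v j 0 k - v i 0 k) ^+ 2 <= 4.
    apply: (@le_trans _ _ (\sum_k (2 * v j 0 k ^+ 2 + 2 * v i 0 k ^+ 2))).
      apply: ler_sum => k _.
      have := sqr_ge0 (v j 0 k + v i 0 k); lra.
    rewrite big_split /= -!mulr_sumr.
    have := vsq j; have := vsq i; lra.
  have X0 : 0 <= \sum_k C (lift ord_max k) j ^+ 2 by apply: sumr_ge0 => k _; exact: sqr_ge0.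
  have Y0 : 0 <= \sum_k (v j 0 k - v i 0 k) ^+ 2 by apply: sumr_ge0 => k _; exact: sqr_ge0.
  nra.
have [s [s1 Hs]] := @sign_choice R n n.+1 (fun j k => C (lift ord_max k) j).
set c := C *m \col_j s j.
set a := \row_k c (lift ord_max k) 0.
set b := c ord_max 0.
have av : forall i, affine_fun a b (v i) = s i.
  by move=> i; rewrite /a /b affine_mx /c mulmxA MC mul1mx mxE.
have ak : forall k, a 0 k = \sum_j s j * C (lift ord_max k) j.
  by move=> k; rewrite !mxE; apply: eq_bigr => j _; rewrite mxE mulrC.
have sqa : n%:R / 4 <= \sum_k a 0 k ^+ 2.
  rewrite (eq_bigr (fun k => (\sum_j s j * C (lift ord_max k) j) ^+ 2)); last by move=> k _; rewrite ak.
  apply: le_trans Hs.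
  apply: le_trans (ler_sum _ (fun j _ => Gj j)).
  rewrite sumr_const card_ord -[_ *+ n.+1]mulr_natr [n.+1%:R]mulrSr; lra.
set N := Num.sqrt (\sum_k a 0 k ^+ 2).
have S0 : 0 <= \sum_k a 0 k ^+ 2 by apply: sumr_ge0 => k _; exact: sqr_ge0.
have nR : (1:R) <= n%:R by rewrite ler1n.
have Npos : 0 < N by rewrite sqrtr_gt0; lra.
have N2 : N ^+ 2 = \sum_k a 0 k ^+ 2 by rewrite sqr_sqrtr.
have Nge : 1/2 * Num.sqrt n%:R <= N.
  apply: sqrt_of_sq_le => //.
  by rewrite exprMn sqr_sqrtr ?ler0n //; lra.
pose e : R := if 0 <= b then 1 else -1.
have e2 : e ^+ 2 = 1 by rewrite /e; case: ifP => _; rewrite ?sqrrN expr1n.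
pose z := (e / N) *: a.
have zsq : \sum_k z 0 k ^+ 2 = 1.
  rewrite (eq_bigr (fun k => (e / N) ^+ 2 * a 0 k ^+ 2)); last by move=> k _; rewrite mxE exprMn.
  rewrite -mulr_sumr -N2 expr_div_n e2 mul1r mulVf //.
  by rewrite expf_neq0 // gt_eqF.
have zB : Bn z by rewrite /Bn /= /enorm zsq sqrtr1.
have az : affine_fun a b z = e * N + b.
  rewrite /affine_fun [X in X + _](eq_bigr (fun k => (e / N) * a 0 k ^+ 2)); last by move=> k _; rewrite [z 0 k]mxE expr2; ring.
  rewrite -mulr_sumr -N2; field; by rewrite gt_eqF.
apply: (@le_trans _ _ (`|affine_fun a b z|)%:E); last first.
  apply: ereal_sup_ubound; exists (@clampf R _ (affine_fun a b)), a, b, z; split => //.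
  - by apply: continuous_subspaceT; apply: clamp_cont; exact: affine_cont.
  - by move=> y _; exact: clamp_bound.
  - by move=> j; rewrite clamp_pm1 // av; exact: s1.
rewrite lee_fin az; apply: le_trans Nge _.
rewrite /e; case: ifP => hb.
  by rewrite mul1r ger0_norm; lra.
move/negbT: hb; rewrite -ltNge => hb.
rewrite mulN1r ler_normr; apply/orP; right; lra.
Qed.

End Lower.

Section Upper.
Variable R : realType.

Definition v0 {n} (j : 'I_n.+1) : 'rV[R]_n :=
  if unlift ord_max j is Some k then delta_mx 0 k else 0.

Lemma v0_entry n (j : 'I_n.+1) (k : 'I_n) :
  v0 j 0 k = if unlift ord_max j is Some k' then (k' == k)%:R else 0.
Proof. by rewrite /v0; case: (unlift ord_max j) => [k'|]; rewrite !mxE // eqxx /= eq_sym. Qed.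

Lemma v0B n (j : 'I_n.+1) : Bn (v0 j).
Proof.
rewrite /Bn /= /enorm -sqrtr1 ler_sqrt //.
rewrite (eq_bigr (fun k => if unlift ord_max j is Some k' then (k' == k)%:R else 0)); last first.
  move=> k _; rewrite v0_entry; case: (unlift ord_max j) => [k'|]; last by rewrite expr0n.
  by case: (k' == k); rewrite ?expr1n ?expr0n.
case: (unlift ord_max j) => [k'|]; last by rewrite big1.
by rewrite (bigD1 k') //= eqxx big1 ?addr0 // => k /negbTE; rewrite eq_sym => ->.
Qed.

Lemma v0nd n : Defs.nondegenerate (@v0 n).
Proof.
apply/negP => /det0P [u u0 uM]; move/negP: u0; apply; apply/eqP.
have col : forall c, (u *m simplex_matrix (@v0 n)) 0 c = 0 by move=> c; rewrite uM mxE.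
have uk : forall k : 'I_n, u 0 (lift ord_max k) = 0.
  move=> k; have := col (lift ord_max k); rewrite mxE => <-.
  rewrite (bigD1 (lift ord_max k)) //= big1 ?addr0.
    by rewrite mxE liftK v0_entry liftK eqxx mulr1.
  move=> i ik; rewrite mxE liftK v0_entry.
  case: (unliftP ord_max i) => [k'|] hi; last by rewrite mulr0.
  case: eqP => [e|]; last by rewrite mulr0.
  by move: ik; rewrite hi e eqxx.
have um : u 0 ord_max = 0.
  have := col ord_max; rewrite mxE big_ord_recr /= big1.
    by rewrite add0r mxE unlift_none mulr1.
  by move=> i _; rewrite widen_lift uk mul0r.
apply/rowP => i; rewrite mxE.
by case: (unliftP ord_max i) => [k|] ->.
Qed.


Lemma upper n : (0 < n)%N -> (proj_norm (@v0 n) <= (3 * Num.sqrt n%:R)%:E)%E.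
Proof.
move=> n0; apply: ge_ereal_sup => r [f [a [b [z [fc fb fint zB ->]]]]].
rewrite lee_fin.
have hb : b = f (v0 ord_max).
  rewrite -fint /affine_fun big1 ?add0r // => i _.
  by rewrite v0_entry unlift_none mulr0.
have hak : forall k, a 0 k + b = f (v0 (lift ord_max k)).
  move=> k; rewrite -fint /affine_fun; congr (_ + _).
  rewrite (bigD1 k) //= big1 ?addr0.
    by rewrite v0_entry liftK eqxx mulr1.
  by move=> i ik; rewrite v0_entry liftK eq_sym (negbTE ik) mulr0.
have fv : forall j, `|f (v0 j)| <= 1 by move=> j; apply: fb; exact: v0B.
have ak2 : forall k, `|a 0 k| <= 2.
  move=> k; have := hak k; rewrite hb => e.
  have -> : a 0 k = f (v0 (lift ord_max k)) - f (v0 ord_max) by rewrite -e; ring.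
  apply: le_trans (ler_normB _ _) _.
  by have := fv (lift ord_max k); have := fv ord_max; lra.
have zs := @sum_abs_le R _ z (@enorm_le1 R _ z zB).
have b1 : `|b| <= 1 by rewrite hb.
have sn : (1:R) <= Num.sqrt (n%:R : R) by apply: sqrt_of_sq_le; rewrite ?expr1n ?ler1n ?ler0n.
rewrite /affine_fun; apply: le_trans (ler_normD _ _) _.
have : `|\sum_i a 0 i * z 0 i| <= 2 * \sum_i `|z 0 i|.
  apply: le_trans (ler_norm_sum _ _ _) _.
  rewrite mulr_sumr; apply: ler_sum => i _.
  by rewrite normrM ler_wpM2r.
lra.
Qed.

End Upper.

Theorem corollary4 (R : realType) :
  exists c1 c2 : R, 0 < c1 /\ 0 < c2 /\
    forall n : nat, (0 < n)%N ->
      ((c1 * Num.sqrt (n%:R))%:E <= theta R n)%E /\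
      (theta R n <= (c2 * Num.sqrt (n%:R))%:E)%E.
Proof.
exists (1/2), 3; split; first by lra.
split; first by lra.
move=> n n0; split.
  apply: le_ereal_inf_tmp => x [v [vB nd] <-].
  exact: lower.
apply: ge_ereal_inf; exists (proj_norm (@v0 R n)); last exact: upper.
exists (@v0 R n) => //; split; [exact: v0B | exact: v0nd].
Qed.
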